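(* Let $a\in(0,\frac23]$, $f\in U_+$ and $x\in[0,\frac1{1-a}]$. Under $\mathbb P_x$, the sequence $\big(f(X_n)\mathbb 1\{\tau>n\}\big)_{n\ge0}$ is a time-homogeneous non-negative Markov chain, and $\tau=\inf\{n\ge1:f(X_n)=0\}$. If $\varkappa'_a<\infty$, this chain has $\varkappa'_a+2$ states, including the absorbing state $0$.
   Context: Let $p\in(0,1)$, $q=1-p$, and let $\xi_1,\xi_2,\dots$ be i.i.d. with $\mathbb P(\xi_1=1)=p$, $\mathbb P(\xi_1=-1)=q$. The chain is $X_{n+1}=aX_n+\xi_{n+1}$, $X_0=x$ under $\mathbb P_x$, and $\tau=\inf\{n\ge0:X_n<0\}$. For $a\in(0,1)$ define $T_a(x)=\frac1a(x+1)$ if $0\le x<1$ and $x\le\frac{2a-1}{1-a}$, and $T_a(x)=\frac1a(x-1)$ if $1\le x\le\frac1{1-a}$. Let $I_a=\big(\frac{2a-1}{1-a},1\big)$, $\varkappa_a=\inf\{k\ge0:T_a^k(0)\in I_a\}$ ($\inf\emptyset=\infty$), and $\varkappa'_a=\#\{T_a^k(0):0\le k<\varkappa_a+1\}-1$ (the number of distinct points of the orbit of $0$ minus one). Let $U_+$ be the set of functions $f:\mathbb R\to\mathbb R$ of the form $f(x)=\sum_{k=0}^{\varkappa_a}u_k\mathbb 1\{x\ge T_a^k(0)\}$ with all $u_k>0$ and $\sum_k u_k<\infty$. *)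

(* Defs.v *)
From Stdlib Require Import Reals Lra List ClassicalEpsilon.
From Coquelicot Require Import Coquelicot.
Import ListNotations.
Open Scope R_scope.

(* T_a as in the paper on its domain
   {0 <= x < 1, x <= (2a-1)/(1-a)} U [1, 1/(1-a)].
   Outside the domain the value is irrelevant: the orbit of 0 is only used
   up to (and including) the first time it enters I_a, and before that time
   it stays in [0, 1/(1-a)] \ I_a, which is the domain of T_a. *)
Definition T_a (a x : R) : R :=
  if excluded_middle_informative (0 <= x < 1 /\ x <= (2*a - 1)/(1 - a))
  then (x + 1) / a
  else (x - 1) / a.

Definition in_I (a y : R) : Prop := (2*a - 1)/(1 - a) < y < 1.

Definition orb (a : R) (k : nat) : R := Nat.iter k (T_a a) 0.

(* k <= varkappa_a  (varkappa_a = inf{k >= 0 : T_a^k(0) \in I_a}, possibly oo) *)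
Definition le_kappa (a : R) (k : nat) : Prop :=
  forall j, (j < k)%nat -> ~ in_I a (orb a j).

Definition orbit_set (a : R) (y : R) : Prop :=
  exists k, le_kappa a k /\ y = orb a k.

(* varkappa'_a = m (in particular varkappa'_a < oo): the orbit set has
   exactly m+1 distinct points. *)
Definition kappa'_eq (a : R) (m : nat) : Prop :=
  exists l : list R, NoDup l /\ length l = (m + 1)%nat /\
    forall y, In y l <-> orbit_set a y.

(* f(x) = sum_{k=0}^{varkappa_a} u_k 1{x >= T_a^k(0)}, u_k > 0, sum u_k < oo.
   (u is given on all of nat; only the u_k with k <= varkappa_a enter f.) *)
Definition in_Uplus (a : R) (f : R -> R) : Prop :=
  exists u : nat -> R,
    (forall k, 0 < u k) /\ ex_series u /\
    forall x, is_series
      (fun k => if excluded_middle_informative (le_kappa a k)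
                then (if excluded_middle_informative (orb a k <= x)
                      then u k else 0)
                else 0) (f x).

(* A sign path: xi k = true means xi_{k+1} = +1, false means xi_{k+1} = -1. *)
Definition sgn (b : bool) : R := if b then 1 else -1.

Fixpoint X (a x : R) (xi : nat -> bool) (n : nat) : R :=
  match n with
  | O => x
  | S k => a * X a x xi k + sgn (xi k)
  end.

(* tau > n, where tau = inf{n >= 0 : X_n < 0} *)
Definition tau_gt (a x : R) (xi : nat -> bool) (n : nat) : Prop :=
  forall k, (k <= n)%nat -> 0 <= X a x xi k.

Definition Y (a : R) (f : R -> R) (x : R) (xi : nat -> bool) (n : nat) : R :=
  if excluded_middle_informative (tau_gt a x xi n) then f (X a x xi n) else 0.

Fixpoint all_lists (n : nat) : list (list bool) :=
  match n with
  | O => (@nil bool) :: nil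
  | S k => flat_map (fun l => [true :: l; false :: l]) (all_lists k)
  end.

(* P(xi_1..xi_n = l) with P(xi = 1) = p, P(xi = -1) = q = 1 - p *)
Definition weight (p : R) (l : list bool) : R :=
  List.fold_right (fun (b : bool) (acc : R) => (if b then p else 1 - p) * acc) 1 l.

Definition xi_of (l : list bool) (k : nat) : bool := nth k l false.

(* P_x(Y_0 = s 0, ..., Y_n = s n); Y_0..Y_n depend only on xi_1..xi_n. *)
Definition hist_prob (p a : R) (f : R -> R) (x : R) (n : nat) (s : nat -> R) : R :=
  List.fold_right Rplus 0
    (map (fun l => weight p l *
            (if excluded_middle_informative
                  (forall k, (k <= n)%nat -> Y a f x (xi_of l) k = s k)
             then 1 else 0))
         (all_lists n)).

Definition is_hom_markov (p a : R) (f : R -> R) (x : R) : Prop :=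
  exists K : R -> R -> R,
    (forall s t, 0 <= K s t) /\
    forall (n : nat) (s : nat -> R),
      hist_prob p a f x (S n) s = hist_prob p a f x n s * K (s n) (s (S n)).

Definition state (a : R) (f : R -> R) (v : R) : Prop :=
  v = 0 \/ exists y, 0 <= y <= 1 / (1 - a) /\ v = f y.

(* Main.v *)
Require Import Defs.
From Stdlib Require Import Reals List Lra Lia ClassicalEpsilon ZArith.
From Coquelicot Require Import Coquelicot.
Import ListNotations.
Open Scope R_scope.

Lemma inv_facts (a : R) : 0 < a < 1 ->
  a * /a = 1 /\ 0 < /a /\ (1 - a) * /(1-a) = 1 /\ 0 < /(1-a).
Proof. intros; repeat split; try apply Rinv_r; try apply Rinv_0_lt_compat; lra. Qed.

Lemma arA1 a z : 0 < a < 1 -> 0 <= z <= 1/(1-a) -> ~ in_I a z -> 0 <= T_a a z <= 1/(1-a).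
Proof.
  intros Ha Hz HI. unfold in_I, T_a in *. unfold Rdiv in *.
  destruct (inv_facts a Ha) as (h1&h2&h3&h4).
  set (ia := /a) in *. set (ic := /(1-a)) in *.
  destruct excluded_middle_informative as [H|H].
  - split. nra.
    assert (z+1 <= a*ic) by nra. nra.
  - assert (1 <= z) by (destruct (Rle_dec 1 z); [lra|]; exfalso; apply HI; split; [|lra];
       destruct (Rle_dec z ((2*a-1)*ic)) as [h|h]; [exfalso; apply H; lra | lra]).
    split. nra. assert (z - 1 <= a * ic) by nra. nra.
Qed.

Lemma arA2 a x b : 0 < a < 1 -> x <= 1/(1-a) -> a * x + sgn b <= 1/(1-a).
Proof.
  intros Ha Hx. destruct (inv_facts a Ha) as (h1&h2&h3&h4). unfold Rdiv in *.
  set (ic := /(1-a)) in *. destruct b; simpl; nra.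
Qed.

Lemma arA3 a x y z : 0 < a < 1 -> a*x + 1 < z <= a*y + 1 -> x < (z-1)/a <= y.
Proof.
  intros Ha H. destruct (inv_facts a Ha) as (h1&h2&h3&h4). unfold Rdiv.
  set (ia := /a) in *.
  assert (ex : x = a*ia*x) by (rewrite h1; ring). assert (ey : y = a*ia*y) by (rewrite h1; ring).
  split; nra.
Qed.

Lemma arA4 a x y z : 0 < a < 1 -> a*x + -1 < z <= a*y + -1 -> y <= 1/(1-a) ->
  z <= (2*a-1)/(1-a) /\ x < (z+1)/a <= y.
Proof.
  intros Ha H Hy. destruct (inv_facts a Ha) as (h1&h2&h3&h4). unfold Rdiv in *.
  set (ia := /a) in *. set (ic := /(1-a)) in *.
  assert (ex : x = a*ia*x) by (rewrite h1; ring). assert (ey : y = a*ia*y) by (rewrite h1; ring).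
  assert (e2 : (2*a-1)*ic = a*ic - 1) by (replace 1 with ((1-a)*ic) at 2 by exact h3; ring).
  split; [|split]; nra.
Qed.

Lemma arA5 a : 0 < a <= 2/3 -> (2*a-1)/(1-a) <= 1 /\ ((2*a-1)/(1-a) = 1 -> a = 2/3).
Proof.
  intros Ha. assert (Ha' : 0 < a < 1) by lra. destruct (inv_facts a Ha') as (h1&h2&h3&h4). unfold Rdiv in *.
  set (ic := /(1-a)) in *. split; nra.
Qed.

Lemma sum_n_nonneg (c : nat -> R) n : (forall k, 0 <= c k) -> 0 <= sum_n c n.
Proof. intros H; induction n. rewrite sum_O; auto. rewrite sum_Sn; unfold plus; simpl; specialize (H (S n)); lra. Qed.

Lemma series_ge_term (c : nat -> R) l : (forall k, 0 <= c k) -> is_series c l -> forall k, c k <= l.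
Proof.
  intros Hc Hs k.
  assert (Hl : forall n, sum_n c n <= l).
  { apply is_lim_seq_incr_compare. exact Hs. intros n. rewrite sum_Sn; unfold plus; simpl; specialize (Hc (S n)); lra. }
  destruct k. rewrite <- sum_O with (a := c). apply Hl.
  specialize (Hl (S k)). rewrite sum_Sn in Hl; unfold plus in Hl; simpl in Hl.
  pose proof (sum_n_nonneg c k Hc). lra.
Qed.

Definition cterm (a : R) (u : nat -> R) (x : R) (k : nat) : R :=
  if excluded_middle_informative (le_kappa a k)
  then (if excluded_middle_informative (orb a k <= x) then u k else 0) else 0.

Lemma le_kappa_S a k : le_kappa a k -> ~ in_I a (orb a k) -> le_kappa a (S k).
Proof. intros H HI j Hj. destruct (Nat.eq_dec j k). subst; auto. apply H; lia. Qed.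

Lemma le_kappa_0 a : le_kappa a 0.
Proof. intros j Hj; lia. Qed.

Lemma orb_bounds a k : 0 < a < 1 -> le_kappa a k -> 0 <= orb a k <= 1/(1-a).
Proof.
  intros Ha; induction k; intros Hk.
  - simpl. destruct (inv_facts a Ha) as (h1&h2&h3&h4). unfold Rdiv. lra.
  - change (orb a (S k)) with (T_a a (orb a k)). apply (arA1 a (orb a k)); auto.
    apply IHk. intros j Hj; apply Hk; lia.
Qed.

Section F.
Variables (a : R) (u : nat -> R) (f : R -> R).
Hypothesis Ha : 0 < a <= 2/3.
Hypothesis Hu : forall k, 0 < u k.
Hypothesis Hf : forall x, is_series (cterm a u x) (f x).

Lemma Ha1 : 0 < a < 1. Proof. lra. Qed.

Lemma cterm_nonneg x k : 0 <= cterm a u x k.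
Proof. unfold cterm; repeat destruct excluded_middle_informative; try lra; left; auto. Qed.

Lemma f_nonneg x : 0 <= f x.
Proof. eapply Rle_trans. apply (cterm_nonneg x 0). apply series_ge_term; auto. apply cterm_nonneg. Qed.

Lemma f_pos x : 0 <= x -> 0 < f x.
Proof.
  intros Hx. eapply Rlt_le_trans with (cterm a u x 0).
  unfold cterm. destruct excluded_middle_informative as [_|h]; [|elim h; apply le_kappa_0].
  destruct excluded_middle_informative as [_|h]; [auto|elim h; simpl; lra].
  apply series_ge_term; auto. apply cterm_nonneg.
Qed.

Lemma f_eq x y : (forall k, le_kappa a k -> ~ (x < orb a k <= y)) -> x <= y -> f x = f y.
Proof.
  intros H Hxy. rewrite <- (is_series_unique _ _ (Hf x)), <- (is_series_unique _ _ (Hf y)).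
  apply Series_ext. intros k. unfold cterm.
  destruct excluded_middle_informative as [hk|]; auto.
  specialize (H k hk).
  repeat destruct excluded_middle_informative; auto; exfalso; lra.
Qed.

Lemma f_neg x : x < 0 -> f x = 0.
Proof.
  intros Hx. rewrite <- (is_series_unique _ _ (Hf x)).
  rewrite (Series_ext _ (fun n => 0 * cterm a u x n)). rewrite Series_scal_l; ring.
  intros k. rewrite Rmult_0_l. unfold cterm. destruct excluded_middle_informative as [hk|]; auto.
  pose proof (orb_bounds a k Ha1 hk).
  destruct excluded_middle_informative; auto; lra.
Qed.

Lemma f_lt x y k : le_kappa a k -> x < orb a k <= y -> f x < f y.
Proof.
  intros hk H.
  pose proof (is_series_minus _ _ _ _ (Hf y) (Hf x)) as Hs.
  unfold plus, opp in Hs; simpl in Hs.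
  assert (0 < cterm a u y k - cterm a u x k).
  { unfold cterm. destruct excluded_middle_informative; [|contradiction].
    repeat destruct excluded_middle_informative; try lra. specialize (Hu k); lra. }
  assert (cterm a u y k + - cterm a u x k <= f y + - f x).
  { apply (series_ge_term (fun n => cterm a u y n + - cterm a u x n)); auto.
    intros n. unfold cterm. destruct excluded_middle_informative; [|lra].
    repeat destruct excluded_middle_informative; try lra. specialize (Hu n); lra. }
  lra.
Qed.

End F.

Lemma pow2_mod3 j : exists q, (2^(Z.of_nat j) = 3*q+1 \/ 2^(Z.of_nat j) = 3*q+2)%Z.
Proof.
  induction j. exists 0%Z; simpl; lia.
  destruct IHj as [q Hq]. rewrite Nat2Z.inj_succ, Z.pow_succ_r by lia.
  destruct Hq as [h|h]; rewrite h. exists (2*q)%Z; lia. exists (2*q+1)%Z; lia.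
Qed.

Lemma orb23 k : exists m j, orb (2/3) k * 2^j = 3 * IZR m.
Proof.
  induction k. exists 0%Z, 0%nat; simpl; lra.
  destruct IHk as (m & j & H).
  change (orb (2/3) (S k)) with (T_a (2/3) (orb (2/3) k)).
  set (z := orb (2/3) k) in *.
  assert (P : IZR (2^Z.of_nat j) = 2^j) by (rewrite <- pow_IZR; reflexivity).
  unfold T_a. destruct excluded_middle_informative.
  - exists (3*m + 2^Z.of_nat j)%Z, (S j). rewrite plus_IZR, mult_IZR, P. simpl. lra.
  - exists (3*m - 2^Z.of_nat j)%Z, (S j). rewrite minus_IZR, mult_IZR, P. simpl. lra.
Qed.

Lemma orb23_ne1 k : orb (2/3) k <> 1.
Proof.
  intros E. destruct (orb23 k) as (m & j & H). rewrite E, Rmult_1_l in H.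
  assert (P : IZR (2^Z.of_nat j) = 2^j) by (rewrite <- pow_IZR; reflexivity).
  rewrite <- P, <- mult_IZR in H. apply eq_IZR in H.
  destruct (pow2_mod3 j) as [q Hq]. lia.
Qed.

Definition nxt (a x : R) (b : bool) : R :=
  if excluded_middle_informative (0 <= x) then a * x + sgn b else -1.

Definition Ind (P : Prop) : R := if excluded_middle_informative P then 1 else 0.

Section G.
Variables (a : R) (u : nat -> R) (f : R -> R).
Hypothesis Ha : 0 < a <= 2/3.
Hypothesis Hu : forall k, 0 < u k.
Hypothesis Hf : forall x, is_series (cterm a u x) (f x).

Lemma key x y b : 0 <= x <= y -> y <= 1/(1-a) -> f x = f y ->
  f (a*x + sgn b) = f (a*y + sgn b).
Proof.
  intros Hxy Hy Efxy. pose proof (Ha1 a Ha) as Ha'.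
  apply (f_eq a u f Hf); [|destruct b; simpl; nra].
  intros k hk [h1 h2]. set (z := orb a k) in *.
  pose proof (orb_bounds a k Ha' hk) as Bz. fold z in Bz.
  destruct b; simpl in h1, h2.
  - assert (nI : ~ in_I a z) by (unfold in_I; nra).
    assert (E : orb a (S k) = (z - 1)/a).
    { change (orb a (S k)) with (T_a a z). unfold T_a. destruct excluded_middle_informative; [nra|auto]. }
    pose proof (arA3 a x y z Ha' (conj h1 h2)) as Hw. rewrite <- E in Hw.
    pose proof (f_lt a u f Hu Hf x y (S k) (le_kappa_S a k hk nI) Hw). lra.
  - destruct (arA4 a x y z Ha' (conj h1 h2) Hy) as [hb Hw].
    destruct (arA5 a Ha) as [hb1 hb2].
    assert (z1 : z < 1).
    { destruct (Req_dec z 1) as [e|ne]; [|lra]. exfalso.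
      assert (a = 2/3) by (apply hb2; lra). subst a. apply (orb23_ne1 k); auto. }
    assert (nI : ~ in_I a z) by (unfold in_I; lra).
    assert (E : orb a (S k) = (z + 1)/a).
    { change (orb a (S k)) with (T_a a z). unfold T_a. destruct excluded_middle_informative as [|n]; [auto|exfalso; apply n; lra]. }
    rewrite <- E in Hw.
    pose proof (f_lt a u f Hu Hf x y (S k) (le_kappa_S a k hk nI) Hw). lra.
Qed.

Lemma f_next x y b : x <= 1/(1-a) -> y <= 1/(1-a) -> f x = f y -> f (nxt a x b) = f (nxt a y b).
Proof.
  intros Hx Hy E. unfold nxt.
  destruct excluded_middle_informative as [hx|hx]; destruct excluded_middle_informative as [hy|hy].
  - destruct (Rle_dec x y). apply key; auto; lra. symmetry; apply key; auto; lra.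
  - pose proof (f_pos a u f Hu Hf x hx). rewrite (f_neg a u f Ha Hf y) in E; lra.
  - pose proof (f_pos a u f Hu Hf y hy). rewrite (f_neg a u f Ha Hf x) in E; lra.
  - reflexivity.
Qed.

Lemma X_S x xi k : X a x xi (S k) = X a (a*x + sgn (xi 0%nat)) (fun j => xi (S j)) k.
Proof. induction k. reflexivity. change (X a x xi (S (S k))) with (a * X a x xi (S k) + sgn (xi (S k))). rewrite IHk. reflexivity. Qed.

Lemma tau_S x xi n : tau_gt a x xi (S n) <-> 0 <= x /\ tau_gt a (a*x + sgn (xi 0%nat)) (fun j => xi (S j)) n.
Proof.
  split.
  - intros H. split. apply (H 0%nat); lia. intros k hk. rewrite <- X_S. apply H; lia.
  - intros [H0 H] k hk. destruct k. exact H0. rewrite X_S. apply H; lia.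
Qed.

Lemma Y_S x xi n : Y a f x xi (S n) = Y a f (nxt a x (xi 0%nat)) (fun j => xi (S j)) n.
Proof.
  unfold Y, nxt. destruct (excluded_middle_informative (0 <= x)) as [hx|hx].
  - destruct excluded_middle_informative as [h|h]; destruct excluded_middle_informative as [h'|h'].
    + rewrite X_S; reflexivity.
    + exfalso; apply h'; apply tau_S; auto.
    + exfalso; apply h; apply tau_S; auto.
    + reflexivity.
  - destruct excluded_middle_informative as [h|h].
    + exfalso; apply hx; apply (h 0%nat); lia.
    + destruct excluded_middle_informative as [h'|h']; auto.
      exfalso. specialize (h' 0%nat (Nat.le_0_l _)). simpl in h'. lra.
Qed.

Lemma Y_0 x xi : Y a f x xi 0 = f x.
Proof.
  unfold Y. destruct excluded_middle_informative as [h|h]. reflexivity.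
  destruct (Rle_dec 0 x). exfalso; apply h; intros k hk; replace k with 0%nat by lia; auto.
  symmetry; apply (f_neg a u f Ha Hf); lra.
Qed.

End G.

Definition Kf (p a : R) (f : R -> R) (v t : R) : R :=
  let y := epsilon (inhabits 0) (fun y => y <= 1/(1-a) /\ f y = v) in
  p * Ind (f (nxt a y true) = t) + (1-p) * Ind (f (nxt a y false) = t).

Fixpoint Pp (K : R -> R -> R) (n : nat) (s : nat -> R) : R :=
  match n with O => 1 | S n => K (s 0%nat) (s 1%nat) * Pp K n (fun j => s (S j)) end.

Lemma Pp_last K n : forall s, Pp K (S n) s = Pp K n s * K (s n) (s (S n)).
Proof. induction n; intros s. simpl; ring. change (Pp K (S (S n)) s) with (K (s 0%nat) (s 1%nat) * Pp K (S n) (fun j => s (S j))).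
  rewrite IHn. simpl. ring. Qed.

Lemma sum_flat (F : list bool -> R) L :
  fold_right Rplus 0 (map F (flat_map (fun l => [true::l; false::l]) L)) =
  fold_right Rplus 0 (map (fun l => F (true::l) + F (false::l)) L).
Proof. induction L; simpl; [ring|]. rewrite IHL; ring. Qed.

Lemma sum_lin (al be : R) (A B : list bool -> R) L :
  fold_right Rplus 0 (map (fun l => al * A l + be * B l) L) =
  al * fold_right Rplus 0 (map A L) + be * fold_right Rplus 0 (map B L).
Proof. induction L; simpl; [ring|]. rewrite IHL; ring. Qed.

Lemma Ind_iff (P Q : Prop) : (P <-> Q) -> Ind P = Ind Q.
Proof. intros H; unfold Ind; repeat destruct excluded_middle_informative; tauto. Qed.

Lemma Ind_and (P Q : Prop) : Ind (P /\ Q) = Ind P * Ind Q.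
Proof. unfold Ind; repeat destruct excluded_middle_informative; try ring; tauto. Qed.

Section H.
Variables (p a : R) (u : nat -> R) (f : R -> R).
Hypothesis Hp : 0 < p < 1.
Hypothesis Ha : 0 < a <= 2/3.
Hypothesis Hu : forall k, 0 < u k.
Hypothesis Hf : forall x, is_series (cterm a u x) (f x).

Lemma path_iff x xi n s :
  (forall k, (k <= S n)%nat -> Y a f x xi k = s k) <->
  (f x = s 0%nat /\ forall k, (k <= n)%nat -> Y a f (nxt a x (xi 0%nat)) (fun j => xi (S j)) k = s (S k)).
Proof.
  split.
  - intros H. split. rewrite <- (Y_0 a u f Ha Hf x xi). apply H; lia.
    intros k hk. rewrite <- (Y_S a f). apply H; lia.
  - intros [H0 H] k hk. destruct k. rewrite (Y_0 a u f Ha Hf). auto.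
    rewrite Y_S. apply H; lia.
Qed.

Lemma nxt_le x b : x <= 1/(1-a) -> nxt a x b <= 1/(1-a).
Proof.
  intros Hx. unfold nxt. destruct excluded_middle_informative. apply arA2; auto; lra.
  destruct (inv_facts a (Ha1 a Ha)) as (h1&h2&h3&h4). unfold Rdiv. lra.
Qed.

Lemma hist_step x n s :
  hist_prob p a f x (S n) s =
  p * Ind (f x = s 0%nat) * hist_prob p a f (nxt a x true) n (fun j => s (S j)) +
  (1-p) * Ind (f x = s 0%nat) * hist_prob p a f (nxt a x false) n (fun j => s (S j)).
Proof.
  unfold hist_prob.
  change (all_lists (S n)) with (flat_map (fun l => [true::l; false::l]) (all_lists n)).
  rewrite sum_flat, <- sum_lin. f_equal. apply map_ext. intros l.
  change (if excluded_middle_informative ?P then 1 else 0) with (Ind P).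
  rewrite !(Ind_iff _ _ (path_iff _ _ _ _)), !Ind_and. unfold xi_of. simpl. ring.
Qed.

Lemma hist_formula n : forall x s, x <= 1/(1-a) ->
  hist_prob p a f x n s = Ind (f x = s 0%nat) * Pp (Kf p a f) n s.
Proof.
  induction n; intros x s Hx.
  - unfold hist_prob. simpl. change (if excluded_middle_informative ?P then 1 else 0) with (Ind P).
    rewrite (Ind_iff _ (f x = s 0%nat)). ring.
    split. intros H. rewrite <- (Y_0 a u f Ha Hf x (xi_of [])). apply H; lia.
    intros H k hk. replace k with 0%nat by lia. rewrite (Y_0 a u f Ha Hf). auto.
  - rewrite hist_step, !IHn by (apply nxt_le; auto).
    simpl Pp. destruct (classic (f x = s 0%nat)) as [e|e];
    [| assert (E0 : Ind (f x = s 0%nat) = 0) by (unfold Ind; destruct excluded_middle_informative; tauto);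
       rewrite E0; ring].
    unfold Kf. set (y := epsilon _ _).
    assert (Hy : y <= 1/(1-a) /\ f y = s 0%nat) by (apply epsilon_spec; exists x; auto).
    destruct Hy as [Hy1 Hy2].
    rewrite !(f_next a u f Ha Hu Hf y x) by (auto; congruence). ring.
Qed.

End H.

Lemma list_max (L : list R) y : (exists z, In z L /\ z <= y) ->
  exists z, In z L /\ z <= y /\ forall w, In w L -> w <= y -> w <= z.
Proof.
  induction L as [|h L IH]; intros [z [Hz Hzy]]. destruct Hz.
  destruct (Rle_dec h y) as [hy|hy].
  - destruct (classic (exists z, In z L /\ z <= y)) as [E|E].
    + destruct (IH E) as (z' & H1 & H2 & H3).
      destruct (Rle_dec h z') as [c|c].
      * exists z'. split; [right; auto|split; auto]. intros w [<-|Hw] Hwy; auto.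
      * exists h. split; [left; auto|split; auto]. intros w [<-|Hw] Hwy. lra.
        specialize (H3 w Hw Hwy); lra.
    + exists h. split; [left; auto|split; auto]. intros w [<-|Hw] Hwy. lra.
      exfalso; apply E; exists w; auto.
  - destruct Hz as [<-|Hz]; [lra|].
    destruct (IH (ex_intro _ z (conj Hz Hzy))) as (z' & H1 & H2 & H3).
    exists z'. split; [right; auto|split; auto]. intros w [<-|Hw] Hwy; [lra|auto].
Qed.

Lemma X_le a x xi n : 0 < a < 1 -> x <= 1/(1-a) -> X a x xi n <= 1/(1-a).
Proof. intros Ha Hx; induction n; simpl; auto. apply arA2; auto. Qed.

Theorem corollary2p4 :
  forall (p a : R) (f : R -> R) (x : R),
    0 < p < 1 ->
    0 < a <= 2 / 3 ->
    in_Uplus a f ->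
    0 <= x <= 1 / (1 - a) ->
    (* time-homogeneous non-negative Markov chain *)
    is_hom_markov p a f x /\
    (forall xi n, 0 <= Y a f x xi n) /\
    (* tau = inf{n >= 1 : f(X_n) = 0} *)
    (forall xi n, tau_gt a x xi n <->
       (forall k, (1 <= k <= n)%nat -> f (X a x xi k) <> 0)) /\
    (* if varkappa'_a = m < oo: m+2 states, including the absorbing state 0 *)
    (forall m : nat, kappa'_eq a m ->
       exists l : list R,
         NoDup l /\ length l = (m + 2)%nat /\
         (forall v, In v l <-> state a f v) /\
         In 0 l /\
         (forall xi n, In (Y a f x xi n) l) /\
         (forall xi n, Y a f x xi n = 0 -> Y a f x xi (S n) = 0)).
Proof.
  intros p a f x Hp Ha [u [Hu [_ Hf']]] Hx.
  assert (Hf : forall x, is_series (cterm a u x) (f x)) by exact Hf'.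
  clear Hf'.
  pose proof (Ha1 a Ha) as Ha'.
  assert (fpos := f_pos a u f Hu Hf).
  assert (fneg := f_neg a u f Ha Hf).
  assert (fnn := f_nonneg a u f Hu Hf).
  split; [|split; [|split]].
  - exists (Kf p a f). split.
    + intros s t. unfold Kf, Ind. repeat destruct excluded_middle_informative; nra.
    + intros n s. rewrite !(hist_formula p a u f Hp Ha Hu Hf) by lra.
      rewrite Pp_last. ring.
  - intros xi n. unfold Y. destruct excluded_middle_informative; auto. lra.
  - intros xi n. split.
    + intros H k hk. specialize (fpos (X a x xi k) (H k ltac:(lia))). lra.
    + intros H k hk. destruct k. simpl; lra.
      destruct (Rle_dec 0 (X a x xi (S k))) as [h|h]; auto.
      exfalso. apply (H (S k)). lia. apply fneg. lra.
  - intros m [l0 [Hnd [Hlen Hl0]]].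
    assert (orbb : forall z, In z l0 -> 0 <= z <= 1/(1-a)).
    { intros z Hz. apply Hl0 in Hz. destruct Hz as [k [hk ->]]. apply orb_bounds; auto. }
    assert (stIn : forall y, 0 <= y <= 1/(1-a) -> In (f y) (map f l0)).
    { intros y Hy.
      destruct (list_max l0 y) as (z & Hz & Hzy & Hmax).
      { exists 0. split; [|lra]. apply Hl0. exists 0%nat. split; [apply le_kappa_0|reflexivity]. }
      replace (f y) with (f z). apply in_map; auto.
      apply (f_eq a u f Hf); auto. intros k hk [h1 h2].
      assert (In (orb a k) l0) by (apply Hl0; exists k; auto).
      specialize (Hmax _ H h2). lra. }
    assert (stateIn : forall v, In v (0 :: map f l0) <-> state a f v).
    { intros v. split.
      - intros [<-|Hv]. left; auto. apply in_map_iff in Hv. destruct Hv as [z [<- Hz]].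
        right. exists z. split; auto.
      - intros [->|[y [Hy ->]]]. left; auto. right; auto. }
    exists (0 :: map f l0). split; [|split; [|split; [|split; [|split]]]].
    + constructor.
      * intros Hin. apply in_map_iff in Hin. destruct Hin as [z [Ez Hz]].
        specialize (fpos z (proj1 (orbb z Hz))). lra.
      * apply NoDup_map_NoDup_ForallPairs; auto.
        intros z1 z2 H1 H2 E.
        pose proof (Hl0 z1) as [A1 _]. pose proof (Hl0 z2) as [A2 _].
        destruct (A1 H1) as [k1 [hk1 e1]]. destruct (A2 H2) as [k2 [hk2 e2]].
        destruct (Rtotal_order z1 z2) as [c|[c|c]]; auto; exfalso.
        -- pose proof (f_lt a u f Hu Hf z1 z2 k2 hk2 ltac:(rewrite <- e2; lra)). lra.
        -- pose proof (f_lt a u f Hu Hf z2 z1 k1 hk1 ltac:(rewrite <- e1; lra)). lra.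
    + simpl. rewrite length_map. lia.
    + exact stateIn.
    + left; auto.
    + intros xi n. unfold Y. destruct excluded_middle_informative as [h|h]; [|left; auto].
      right. apply stIn. split. apply h; lia. apply X_le; lra.
    + intros xi n H. unfold Y in *.
      destruct (excluded_middle_informative (tau_gt a x xi (S n))) as [h|h]; auto.
      destruct excluded_middle_informative as [h'|h'].
      * specialize (fpos (X a x xi n) (h' n (le_n _))). lra.
      * exfalso. apply h'. intros k hk. apply h. lia.
Qed.
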